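(* For all $y,y'\in\mathbb{R}^d$, $$\bigl|K(|y'|)y'-K(|y|)y\bigr|\le \sqrt{2(a^2+1)}\,a_0^{-1}\,|y'-y|.$$
   Context: Let $g(s)=a_0+a_1s^{\alpha_1}+\cdots+a_Ns^{\alpha_N}$ for $s\ge 0$, where $N\ge1$, $0<\alpha_1<\dots<\alpha_N$ are fixed numbers and $a_0,\dots,a_N\ge0$ with $a_0>0$, $a_N>0$. Define $K:[0,\infty)\to(0,\infty)$ by $K(\xi)=1/g(s(\xi))$, where $s=s(\xi)\ge0$ is the unique solution of $s\,g(s)=\xi$. Set $a=\alpha_N/(\alpha_N+1)\in(0,1)$. $|\cdot|$ is the Euclidean norm on $\mathbb{R}^d$. *)

(* Defs.v *)
From HB Require Import structures.
From mathcomp Require Import all_boot all_order all_algebra.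
From mathcomp Require Import all_classical all_reals all_analysis.
Set Implicit Arguments. Unset Strict Implicit. Unset Printing Implicit Defensive.
Import Order.TTheory GRing.Theory Num.Theory.
Local Open Scope ring_scope.
Local Open Scope classical_set_scope.

Definition gfun (R : realType) (N : nat) (acoef alpha : nat -> R) (s : R) : R :=
  acoef 0%N + \sum_(1 <= i < N.+1) acoef i * s `^ alpha i.

Definition sol (R : realType) (N : nat) (acoef alpha : nat -> R) (xi : R) : R :=
  xget 0 [set s | 0 <= s /\ s * gfun N acoef alpha s = xi].

Definition Kfun (R : realType) (N : nat) (acoef alpha : nat -> R) (xi : R) : R :=
  1 / gfun N acoef alpha (sol N acoef alpha xi).

Definition enorm (R : realType) (d : nat) (v : 'rV[R]_d) : R :=
  Num.sqrt (\sum_(i < d) v 0 i ^+ 2).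

(* Main.v *)
Require Import Defs.
From HB Require Import structures.
From mathcomp Require Import all_boot all_order all_algebra.
From mathcomp Require Import all_classical all_reals all_analysis.
From mathcomp Require Import ring lra.
Import Order.TTheory GRing.Theory Num.Theory.
Local Open Scope ring_scope.
Local Open Scope classical_set_scope.
Import numFieldNormedType.Exports.
Lemma arith_key (R : realType) (a0 g g' s s' b : R) : 0 < a0 -> a0 <= g -> g <= g' ->
  0 <= s -> s <= s' -> 0 < b -> s * (g' - g) <= b * (s' - s) * g' ->
  (1 / g - 1 / g') * (s * g) <= (b / (b + 1)) / a0 * (s' * g' - s * g).
Proof.
move=> a0p ag gg s0 ss bp key.
have gp : 0 < g by apply: lt_le_trans ag.
have gp' : 0 < g' by apply: lt_le_trans gg.
have D0 : 0 <= s * (g' - g) by rewrite mulr_ge0 // subr_ge0.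
have -> : (1 / g - 1 / g') * (s * g) = s * (g' - g) / g'.
  by field; rewrite !gt_eqF.
apply: (@le_trans _ _ (s * (g' - g) / a0)).
  by apply: ler_wpM2l => //; rewrite lef_pV2 ?posrE // (le_trans ag).
have -> : b / (b + 1) / a0 * (s' * g' - s * g) = (b / (b + 1) * (s' * g' - s * g)) / a0.
  by field; apply/andP; split; apply/negP => /eqP; lra.
rewrite ler_pM2r ?invr_gt0 //.
rewrite -subr_ge0.
have -> : b / (b + 1) * (s' * g' - s * g) - s * (g' - g) =
   (b * (s' - s) * g' - s * (g' - g)) / (b + 1).
  by field; rewrite gt_eqF //; lra.
by rewrite divr_ge0 ?subr_ge0 //; lra.
Qed.
Lemma mono_ineq (R : realType) (s s' al be : R) : 0 <= s -> s <= s' -> 0 < al -> al <= be ->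
  s * (s' `^ al - s `^ al) <= be * (s' - s) * s' `^ al.
Proof.
move=> s0 ss al0 albe.
have s'0 : 0 <= s' by apply: le_trans ss.
have q0 : 0 < (al + 1) / al by rewrite divr_gt0 //; lra.
have p0 : 0 < al + 1 by lra.
have := @conjugate_powR R s (s' `^ al) (al + 1) ((al + 1) / al) s0 (powR_ge0 _ _) p0 q0.
have -> : (al + 1)^-1 + ((al + 1) / al)^-1 = 1.
  rewrite invf_div; field; lra.
move=> /(_ erefl).
rewrite -powRrM.
have -> : al * ((al + 1) / al) = al + 1 by rewrite mulrC mulfVK // gt_eqF.
rewrite -(mulr_powRB1 s0 p0) -(mulr_powRB1 s'0 p0) addrK invf_div.
set A := s `^ al; set B := s' `^ al.
have B0 : 0 <= B by apply: powR_ge0.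
have A0 : 0 <= A by apply: powR_ge0.
move=> H.
have H2 : (al + 1) * (s * B) <= s * A + al * (s' * B).
  have E : s * A / (al + 1) + s' * B * (al / (al + 1)) = (s * A + al * (s' * B)) / (al + 1).
    field; lra.
  rewrite E in H.
  by rewrite mulrC -ler_pdivlMr.
have H3 : s * (B - A) <= al * (s' - s) * B by nra.
apply: le_trans H3 _.
by rewrite ler_wpM2r // ler_wpM2r // subr_ge0.
Qed.
Lemma powR_cont (R : realType) (al x : R) : 0 < x -> {for x, continuous (fun s : R => s `^ al)}.
Proof.
move=> x0; apply: differentiable_continuous; apply/derivable1_diffP.
by apply: derivable_powR; rewrite in_itv /= x0.
Qed.

Lemma sg_cont (R : realType) (N : nat) (acoef alpha : nat -> R) (x : R) : 0 < x ->
  {for x, continuous (fun s : R => s * gfun N acoef alpha s)}.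
Proof.
move=> x0; rewrite /gfun.
apply: cvgM; first exact: cvg_id.
apply: cvgD; first exact: cvg_cst.
apply: cvg_big => //.
  exact: add_continuous.
move=> i _; apply: cvgM; first exact: cvg_cst.
exact: powR_cont.
Qed.
Definition sqn (R : realType) (d : nat) (v : 'rV[R]_d) : R := \sum_(i < d) v 0 i ^+ 2.
Arguments sqn {R d}.

Lemma sqn_ge0 {R : realType} {d : nat} (v : 'rV[R]_d) : 0 <= sqn v.
Proof. by apply: sumr_ge0 => i _; rewrite sqr_ge0. Qed.

Lemma enorm_sq {R : realType} {d : nat} (v : 'rV[R]_d) : enorm v ^+ 2 = sqn v.
Proof. by rewrite /enorm sqr_sqrtr // sqn_ge0. Qed.

Lemma enorm_ge0 {R : realType} {d : nat} (v : 'rV[R]_d) : 0 <= enorm v.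
Proof. exact: sqrtr_ge0. Qed.

Lemma sqnD {R : realType} {d : nat} (p q : 'rV[R]_d) : sqn (p + q) <= 2 * sqn p + 2 * sqn q.
Proof.
rewrite /sqn !mulr_sumr -big_split /=; apply: ler_sum => i _.
rewrite mxE; set x := p 0 i; set z := q 0 i.
rewrite -subr_ge0; have -> : 2 * x ^+ 2 + 2 * z ^+ 2 - (x + z) ^+ 2 = (x - z) ^+ 2 by ring.
exact: sqr_ge0.
Qed.

Lemma sqnZ {R : realType} {d : nat} (c : R) (p : 'rV[R]_d) : sqn (c *: p) = c ^+ 2 * sqn p.
Proof.
by rewrite /sqn mulr_sumr; apply: eq_bigr => i _; rewrite mxE exprMn.
Qed.

Lemma sqn_eq0 {R : realType} {d : nat} (v : 'rV[R]_d) : sqn v = 0 -> forall i, v 0 i = 0.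
Proof.
move=> h i; have H := psumr_eq0P (fun j _ => sqr_ge0 (v 0 j)) h.
by move: (H i isT) => /eqP; rewrite sqrf_eq0 => /eqP.
Qed.

Lemma cs {R : realType} {d : nat} (y y' : 'rV[R]_d) :
  \sum_(i < d) y 0 i * y' 0 i <= enorm y * enorm y'.
Proof.
have r0 := enorm_ge0 y; have r0' := enorm_ge0 y'.
have [ry|ry] := eqVneq (enorm y) 0.
  have hy : sqn y = 0 by rewrite -enorm_sq ry expr0n.
  rewrite ry mul0r big1 // => i _; by rewrite (sqn_eq0 _ hy) mul0r.
have [ry'|ry'] := eqVneq (enorm y') 0.
  have hy : sqn y' = 0 by rewrite -enorm_sq ry' expr0n.
  rewrite ry' mulr0 big1 // => i _; by rewrite (sqn_eq0 _ hy) mulr0.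
set r := enorm y in r0 ry *; set r' := enorm y' in r0' ry' *.
have rp : 0 < r by rewrite lt_def ry.
have rp' : 0 < r' by rewrite lt_def ry'.
have H : 2 * \sum_(i < d) y 0 i * y' 0 i <= (r' / r) * sqn y + (r / r') * sqn y'.
  rewrite /sqn !mulr_sumr -big_split /=; apply: ler_sum => i _.
  set x := y 0 i; set z := y' 0 i.
  have e : r' / r * x ^+ 2 + r / r' * z ^+ 2 - 2 * (x * z) = (r' * x - r * z) ^+ 2 / (r * r').
    by field; apply/andP; split; rewrite gt_eqF.
  rewrite -subr_ge0 e divr_ge0 ?sqr_ge0 // mulr_ge0 // ltW.
move: H; rewrite -!enorm_sq -/r -/r'.
have -> : r' / r * r ^+ 2 + r / r' * r' ^+ 2 = 2 * (r * r').
  by field; apply/andP; split; rewrite gt_eqF.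
by rewrite ler_pM2l.
Qed.

Lemma rev_tri {R : realType} {d : nat} (y y' : 'rV[R]_d) :
  (enorm y' - enorm y) ^+ 2 <= sqn (y' - y).
Proof.
have -> : sqn (y' - y) = sqn y' + sqn y - 2 * \sum_(i < d) y 0 i * y' 0 i.
  rewrite /sqn mulr_sumr -big_split -sumrB /=; apply: eq_bigr => i _.
  rewrite !mxE; ring.
have := cs y y'; rewrite -!enorm_sq.
set r := enorm y; set r' := enorm y'; set S := \sum_(_ < _) _.
move=> h; nra.
Qed.
Section G.
Variables (R : realType) (N : nat) (acoef alpha : nat -> R).
Hypotheses (hN : (1 <= N)%N)
  (halpha1 : 0 < alpha 1%N)
  (halpha_inc : forall i : nat, (1 <= i)%N -> (i < N)%N -> alpha i < alpha i.+1)
  (hacoef : forall i : nat, (i <= N)%N -> 0 <= acoef i)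
  (ha0 : 0 < acoef 0%N).

Local Notation g := (gfun N acoef alpha).
Local Notation sl := (sol N acoef alpha).

Lemma alpha_pos i : (1 <= i <= N)%N -> 0 < alpha i.
Proof.
elim: i => [//|[|i] IH /andP[_ hi]]; first by [].
apply: lt_trans (halpha_inc _ _ _) => //.
by apply: IH; rewrite /= ltnW.
Qed.

Lemma alpha_leN i : (1 <= i <= N)%N -> alpha i <= alpha N.
Proof.
move=> /andP[h1 h2].
suff H : forall k, (i + k <= N)%N -> alpha i <= alpha (i + k).
  by have := H (N - i)%N; rewrite subnKC //; apply.
elim=> [|k IH hk]; first by rewrite addn0.
rewrite addnS in hk *.
apply: le_trans (IH (ltnW hk)) (ltW (halpha_inc _ _ hk)).
by rewrite (leq_trans h1) // leq_addr.
Qed.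

Lemma sum_ge0 (F : nat -> R) : (forall i, (1 <= i < N.+1)%N -> 0 <= F i) ->
  0 <= \sum_(1 <= i < N.+1) F i.
Proof.
move=> H; rewrite big_nat_cond; apply: sumr_ge0 => i /andP[hi _]; exact: H.
Qed.

Lemma gfun_ge s : 0 <= s -> acoef 0 <= g s.
Proof.
move=> s0; rewrite /gfun lerDl; apply: sum_ge0 => i /andP[_ hi].
by rewrite mulr_ge0 ?powR_ge0 ?hacoef.
Qed.

Lemma gfun_mono s s' : 0 <= s -> s <= s' -> g s <= g s'.
Proof.
move=> s0 ss; rewrite /gfun lerD2l; apply: ler_sum_nat => i /andP[h1 h2].
rewrite ler_wpM2l ?hacoef //; apply: ge0_ler_powR => //.
all: try by rewrite nnegrE.
all: try by rewrite nnegrE (le_trans s0).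
by apply/ltW/alpha_pos; rewrite h1.
Qed.

Lemma gfun_key s s' : 0 <= s -> s <= s' ->
  s * (g s' - g s) <= alpha N * (s' - s) * g s'.
Proof.
move=> s0 ss; rewrite /gfun opprD addrACA subrr add0r -sumrB mulr_sumr mulrDr.
have aN : 0 < alpha N by apply: alpha_pos; rewrite hN leqnn.
have X : 0 <= alpha N * (s' - s) * acoef 0.
  by rewrite mulr_ge0 // ?mulr_ge0 ?subr_ge0 // ltW.
set T := alpha N * (s' - s) * \sum_(1 <= i < N.+1) acoef i * s' `^ alpha i.
suff : \sum_(1 <= i < N.+1) s * (acoef i * s' `^ alpha i - acoef i * s `^ alpha i) <= T.
  move: X; set U := \sum_(_ <= _ < _) _; lra.
rewrite /T mulr_sumr; apply: ler_sum_nat => i /andP[h1 h2].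
rewrite -mulrBr.
have -> : s * (acoef i * (s' `^ alpha i - s `^ alpha i)) = acoef i * (s * (s' `^ alpha i - s `^ alpha i)) by ring.
have -> : alpha N * (s' - s) * (acoef i * s' `^ alpha i) = acoef i * (alpha N * (s' - s) * s' `^ alpha i) by ring.
rewrite ler_wpM2l ?hacoef //.
apply: mono_ineq => //.
  by apply: alpha_pos; rewrite h1.
by apply: alpha_leN; rewrite h1.
Qed.

Lemma sol_spec xi : 0 <= xi -> 0 <= sl xi /\ sl xi * g (sl xi) = xi.
Proof.
move=> xi0.
suff H : exists s, 0 <= s /\ s * g s = xi.
  exact: (xgetPex 0 H).
case: (eqVneq xi 0) => [->|xn0]; first by exists 0; rewrite mul0r.
have xp : 0 < xi by rewrite lt_def xn0.
have g1 : acoef 0 <= g 1 := @gfun_ge 1 ler01.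
have g1p : 0 < g 1 by apply: lt_le_trans g1.
set e := Num.min 1 (xi / g 1).
have ep : 0 < e by rewrite lt_min ltr01 divr_gt0.
have e1 : e <= 1 by rewrite ge_min lexx.
have e2 : e <= xi / g 1 by rewrite ge_min lexx orbT.
set M := xi / acoef 0 + 1.
have eM : e <= M.
  by apply: le_trans (e1) _; rewrite /M lerDr divr_ge0 // ltW.
have fe : e * g e <= xi.
  have ge : g e <= g 1 := @gfun_mono e 1 (ltW ep) e1.
  have ge0 : 0 <= g e := le_trans (ltW ha0) (@gfun_ge e (ltW ep)).
  apply: le_trans (_ : (xi / g 1) * g 1 <= xi).
    apply: ler_pM => //; exact: ltW.
  by rewrite divfK // gt_eqF.
have fM : xi <= M * g M.
  have M0 : 0 <= M by apply: le_trans (eM); exact: ltW.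
  have gM : acoef 0 <= g M := @gfun_ge M M0.
  apply: le_trans (_ : M * acoef 0 <= _); last by apply: ler_wpM2l.
  by rewrite /M mulrDl divfK ?gt_eqF // mul1r lerDl ltW.
have cont : {within `[e, M], continuous (fun s => s * g s)}.
  apply: continuous_in_subspaceT => z; rewrite inE /= in_itv /= => /andP[ez _].
  by apply: sg_cont; apply: lt_le_trans ez.
have bnd : Num.min (e * g e) (M * g M) <= xi <= Num.max (e * g e) (M * g M).
  by rewrite ge_min fe le_max fM orbT.
have [c cI fc] := @IVT R (fun s => s * g s) e M xi eM cont bnd.
exists c; split => //.
by move: cI; rewrite in_itv /= => /andP[ec _]; apply: ltW; apply: lt_le_trans ec.
Qed.


Local Notation K := (Kfun N acoef alpha).

Lemma K_bounds xi : 0 <= xi -> 0 < K xi /\ K xi <= (acoef 0)^-1.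
Proof.
move=> xi0; have [s0 _] := @sol_spec xi xi0.
have ga := @gfun_ge (sl xi) s0.
have gp : 0 < g (sl xi) := lt_le_trans ha0 ga.
rewrite /Kfun div1r; split; first by rewrite invr_gt0.
by rewrite lef_pV2 ?posrE.
Qed.

Lemma K_diff r r' : 0 <= r -> r <= r' ->
  0 <= K r - K r' /\
  (K r - K r') * r <= (alpha N / (alpha N + 1)) / acoef 0 * (r' - r).
Proof.
move=> r0 rr; have r0' : 0 <= r' := le_trans r0 rr.
have [s0 hs] := @sol_spec r r0; have [s0' hs'] := @sol_spec r' r0'.
rewrite /Kfun.
move: s0 hs s0' hs'; set s := sl r; set s' := sl r' => s0 hs s0' hs'.
have gp' : 0 < g s' := lt_le_trans ha0 (@gfun_ge s' s0').
have gp : 0 < g s := lt_le_trans ha0 (@gfun_ge s s0).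
have ss : s <= s'.
  rewrite leNgt; apply/negP => hlt.
  have gg := @gfun_mono s' s s0' (ltW hlt).
  have : s' * g s' < s * g s.
    apply: (@lt_le_trans _ _ (s * g s')); first by rewrite ltr_pM2r.
    by apply: ler_wpM2l.
  rewrite hs hs'; lra.
have gg := @gfun_mono s s' s0 ss.
have ga := @gfun_ge s s0.
have aN : 0 < alpha N by apply: alpha_pos; rewrite hN leqnn.
split.
  by rewrite subr_ge0 !div1r lef_pV2 ?posrE.
rewrite -{1}hs -hs -hs'; apply: arith_key => //.
exact: gfun_key.
Qed.
End G.

Lemma sq_le {R : realType} {x z : R} : 0 <= x -> x <= z -> x ^+ 2 <= z ^+ 2.
Proof. move=> x0 xz; nra. Qed.

Theorem proposition2p2 (R : realType) (N : nat) (acoef alpha : nat -> R) (d : nat)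
  (hN : (1 <= N)%N)
  (halpha1 : 0 < alpha 1%N)
  (halpha_inc : forall i : nat, (1 <= i)%N -> (i < N)%N -> alpha i < alpha i.+1)
  (hacoef : forall i : nat, (i <= N)%N -> 0 <= acoef i)
  (ha0 : 0 < acoef 0%N) (haN : 0 < acoef N)
  (y y' : 'rV[R]_d) :
  let a := alpha N / (alpha N + 1) in
  enorm (Kfun N acoef alpha (enorm y') *: y' - Kfun N acoef alpha (enorm y) *: y)
    <= Num.sqrt (2 * (a ^+ 2 + 1)) * (acoef 0%N)^-1 * enorm (y' - y).
Proof.
cbv zeta; set a := alpha N / (alpha N + 1).
have Kb := @K_bounds R N acoef alpha halpha1 halpha_inc hacoef ha0.
have Kd := @K_diff R N acoef alpha hN halpha1 halpha_inc hacoef ha0.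
have r0 := enorm_ge0 y; have r0' := enorm_ge0 y'.
have [Kp Kle] := Kb _ r0; have [Kp' Kle'] := Kb _ r0'.
have RT := rev_tri y y'.
have sy : sqn y = enorm y ^+ 2 by rewrite enorm_sq.
have sy' : sqn y' = enorm y' ^+ 2 by rewrite enorm_sq.
have E : forall v : 'rV[R]_d, enorm v = Num.sqrt (sqn v) by [].
rewrite [X in X <= _]E [enorm (y' - y)]E.
move: Kd Kp Kle Kp' Kle' RT sy sy'.
set K := Kfun N acoef alpha (enorm y); set K' := Kfun N acoef alpha (enorm y').
set r := enorm y; set r' := enorm y'; set S := sqn (y' - y).
set ia := (acoef 0)^-1.
move=> Kd Kp Kle Kp' Kle' RT sy sy'.
have S0 : 0 <= S by apply: sqn_ge0.
have ia0 : 0 < ia by rewrite invr_gt0.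
have c0 : 0 <= 2 * (a ^+ 2 + 1) by rewrite mulr_ge0 // addr_ge0 // sqr_ge0.
have -> : Num.sqrt (2 * (a ^+ 2 + 1)) * ia * Num.sqrt S =
    Num.sqrt (2 * (a ^+ 2 + 1) * ia ^+ 2 * S).
  have c1 : 0 <= 2 * (a ^+ 2 + 1) * ia ^+ 2 by rewrite mulr_ge0 // sqr_ge0.
  rewrite (sqrtrM S c1) (sqrtrM _ c0) sqrtr_sqr ger0_norm //; exact: ltW.
rewrite ler_sqrt; last by rewrite mulr_ge0 // mulr_ge0 // sqr_ge0.
have hK' : K' ^+ 2 * S <= ia ^+ 2 * S := ler_wpM2r S0 (sq_le (ltW Kp') Kle').
have hK : K ^+ 2 * S <= ia ^+ 2 * S := ler_wpM2r S0 (sq_le (ltW Kp) Kle).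
have [hrr|hrr] := leP r r'.
  have [D0 Dle] := Kd _ _ r0 hrr.
  have h2 : (K' - K) ^+ 2 * sqn y <= a ^+ 2 * ia ^+ 2 * S.
    rewrite sy.
    have -> : (K' - K) ^+ 2 * r ^+ 2 = ((K - K') * r) ^+ 2 by ring.
    have rr0 : 0 <= r := r0.
    apply: le_trans (sq_le (mulr_ge0 D0 rr0) Dle) _.
    have -> : (a * ia * (r' - r)) ^+ 2 = a ^+ 2 * ia ^+ 2 * (r' - r) ^+ 2 by ring.
    by apply: ler_wpM2l => //; rewrite mulr_ge0 // sqr_ge0.
  have -> : K' *: y' - K *: y = K' *: (y' - y) + (K' - K) *: y.
    by rewrite scalerBr scalerBl addrA subrK.
  apply: le_trans (sqnD _ _) _; rewrite !sqnZ -/S.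
  move: hK' h2; set P := K' ^+ 2 * S; set Q := (K' - K) ^+ 2 * sqn y.
  move=> hK' h2.
  have -> : 2 * (a ^+ 2 + 1) * ia ^+ 2 * S = 2 * (ia ^+ 2 * S) + 2 * (a ^+ 2 * ia ^+ 2 * S) by ring.
  have two : (0:R) <= 2 by [].
  exact: (lerD (ler_wpM2l two hK') (ler_wpM2l two h2)).
have hrr' : r' <= r := ltW hrr.
have [D0 Dle] := Kd _ _ r0' hrr'.
have h2 : (K' - K) ^+ 2 * sqn y' <= a ^+ 2 * ia ^+ 2 * S.
  rewrite sy'.
  have -> : (K' - K) ^+ 2 * r' ^+ 2 = ((K' - K) * r') ^+ 2 by ring.
  have rr0 : 0 <= r' := r0'.
  apply: le_trans (sq_le (mulr_ge0 D0 rr0) Dle) _.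
  have -> : (a * ia * (r - r')) ^+ 2 = a ^+ 2 * ia ^+ 2 * (r' - r) ^+ 2 by ring.
  by apply: ler_wpM2l => //; rewrite mulr_ge0 // sqr_ge0.
have -> : K' *: y' - K *: y = K *: (y' - y) + (K' - K) *: y'.
  by rewrite scalerBr scalerBl [RHS]addrC addrA subrK.
apply: le_trans (sqnD _ _) _; rewrite !sqnZ -/S.
move: hK h2; set P := K ^+ 2 * S; set Q := (K' - K) ^+ 2 * sqn y'.
move=> hK h2.
have -> : 2 * (a ^+ 2 + 1) * ia ^+ 2 * S = 2 * (ia ^+ 2 * S) + 2 * (a ^+ 2 * ia ^+ 2 * S) by ring.
have two : (0:R) <= 2 by [].
exact: (lerD (ler_wpM2l two hK) (ler_wpM2l two h2)).
Qed.
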